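(* Let $n\ge1$, $0<T_0<T_1<\dots<T_n$ with $T_i=T_{i-1}+P$ ($1\le i\le n$) for some $P>0$, let $0<B_{\mathrm{low}}<B_{\mathrm{up}}$, $F>0$, and let $C_i:=\mathbf{1}_{\{B_{\mathrm{low}}<S_u<B_{\mathrm{up}}\ \forall u\in[T_{i-1},T_i]\}}$ for $1\le i\le n$, $A:=\sum_{i=1}^nC_i$. Fix $t<T_0$ and write $\mathbb{P}_t,\mathbb{E}_t$ for (risk-neutral) probability and expectation conditional on $\mathcal{F}_t$. Then the time-$t$ price of the payoff $(F-A)^+$ paid at $T_n$ satisfies \[ e^{-r(T_n-t)}\mathbb{E}_t[(F-A)^+]=e^{-r(T_n-t)}\sum_{i=0}^{n\wedge\lfloor F\rfloor}(F-i)\,\mathbb{P}_t[A=i], \] where $\mathbb{P}_t[A=n]=\mathbb{P}_t[B_{\mathrm{low}}<S_u<B_{\mathrm{up}}\ \forall u\in[T_0,T_n]]$; the remaining point masses $\mathbb{P}_t[A=i]$, $0\le i\le n-1$, are determined by $\mathbb{P}_t[A=n]$ and the moments $\mathbb{E}_t[A^\nu]$, $0\le\nu<n$, through the linear system $\mathbb{E}_t[A^\nu]=\sum_{i=0}^n i^\nu\,\mathbb{P}_t[A=i]$; and for $1\le\nu<n$, \[ \mathbb{E}_t[A^\nu]=\sum_{J\subseteq\{1,\dots,n\}}c(\nu,J)\,\mathbb{P}_t\big[B_{\mathrm{low}}<S_u<B_{\mathrm{up}}\ \forall u\in\textstyle\bigcup_{j\in J}[T_{j-1},T_{j-1}+P]\big],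 \] with $c(\nu,J):=\sum_{0\le i_1,\dots,i_n\le\nu,\ \mathrm{supp}(\mathbf{i})=J}\binom{\nu}{i_1,\dots,i_n}$.
   Context: Black–Scholes model under the pricing measure: $dS_t/S_t=r\,dt+\sigma\,dW_t$, $r>0$, $\sigma>0$, $W$ a standard Brownian motion with filtration $(\mathcal{F}_t)$. For $\mathbf{i}=(i_1,\dots,i_n)$, $\mathrm{supp}(\mathbf{i})$ is the set of indices $k$ with $i_k\neq0$, and $\binom{\nu}{i_1,\dots,i_n}$ is the multinomial coefficient (zero unless $i_1+\dots+i_n=\nu$). The conditional probabilities appearing are the undiscounted prices (i.e. $e^{r(\cdot)}$ times the discounted prices) of multi-period double barrier digitals. *)

(* Defs.v *)
From HB Require Import structures.
From mathcomp Require Import all_boot all_order all_algebra.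
From mathcomp Require Import all_classical all_reals all_analysis.
From mathcomp Require Import normal_distribution.
Set Implicit Arguments. Unset Strict Implicit. Unset Printing Implicit Defensive.
Import Order.TTheory GRing.Theory Num.Theory.
Import numFieldNormedType.Exports.
Local Open Scope classical_set_scope.
Local Open Scope ring_scope.

Section defs.
Context {R : realType} {d : measure_display} {Omega : measurableType d}.

Definition G_measurable (G : set (set Omega)) (Y : Omega -> R) :=
  forall B : set R, measurable B -> G (Y @^-1` B).

Definition is_cond_exp (P : probability Omega R) (G : set (set Omega))
    (X Y : Omega -> R) :=
  [/\ G_measurable G Y, P.-integrable setT (EFin \o Y) &
      forall A, G A ->
        (\int[P]_(x in A) (Y x)%:E = \int[P]_(x in A) (X x)%:E)%E].

Definition is_filtration (F : R -> set (set Omega)) :=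
  (forall s, 0 <= s -> sigma_algebra setT (F s) /\ F s `<=` measurable) /\
  (forall s u, 0 <= s -> s <= u -> F s `<=` F u).

Definition std_BM (P : probability Omega R) (F : R -> set (set Omega))
    (W : R -> Omega -> R) :=
  [/\ forall w, W 0 w = 0,
      forall w, {within `[0, +oo[, continuous (fun u => W u w)},
      forall s, 0 <= s -> G_measurable (F s) (W s),
      forall s u, 0 <= s -> s < u -> forall B : set R, measurable B ->
        P ((fun w => W u w - W s w) @^-1` B) = normal_prob 0 (Num.sqrt (u - s)) B
    & forall s u, 0 <= s -> s < u -> forall (A : set Omega) (B : set R),
        F s A -> measurable B ->
        P (A `&` (fun w => (W u w - W s w)%R) @^-1` B) =
        (P A * P ((fun w => (W u w - W s w)%R) @^-1` B))%E].

Definition inside (S : R -> Omega -> R) (Blow Bup : R) (I : set R) : set Omega :=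
  [set w | forall u, I u -> Blow < S u w < Bup].
End defs.

Definition multinom (nu : nat) (k : seq nat) : nat :=
  if sumn k == nu then (nu`! %/ \prod_(x <- k) x`!)%N else 0%N.

Definition cnuJ (nu n : nat) (J : {set 'I_n}) : nat :=
  (\sum_(i : {ffun 'I_n -> 'I_nu.+1} | finset (fun k => val (i k) != 0%N) == J)
     multinom nu [seq val (i k) | k <- enum 'I_n])%N.

(* Main.v *)
Require Import Defs.
From HB Require Import structures.
From mathcomp Require Import all_boot all_order all_algebra.
From mathcomp Require Import all_classical all_reals all_analysis measurable_realfun.
From mathcomp Require Import normal_distribution.
From mathcomp Require Import ring lra.
Import Order.TTheory GRing.Theory Num.Theory.
Import numFieldNormedType.Exports.
Local Open Scope classical_set_scope.
Local Open Scope ring_scope.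

Section S.
Context {R : realType} {d : measure_display} {Omega : measurableType d}.
Implicit Types (G : set (set Omega)).

Lemma Gm_to {G : set (set Omega)} {Y : Omega -> R} :
  G_measurable G Y -> measurable_fun (setT : set (g_sigma_algebraType G)) Y.
Proof.
move=> mY _ B mB; rewrite setTI; apply: sub_sigma_algebra; exact: mY.
Qed.

Lemma Gm_from (G : set (set Omega)) (Y : Omega -> R) : sigma_algebra setT G ->
  measurable_fun (setT : set (g_sigma_algebraType G)) Y -> G_measurable G Y.
Proof.
move=> sG mY B mB; have := mY measurableT B mB; rewrite setTI.
by rewrite /measurable /= sigma_algebra_id.
Qed.

Lemma Gm_meas {G} {Y : Omega -> R} : G `<=` measurable -> G_measurable G Y ->
  measurable_fun setT Y.
Proof. by move=> GM mY _ B mB; rewrite setTI; apply: GM; exact: mY. Qed.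

Lemma ce_half {P : probability Omega R} {G X Y1 Y2} : sigma_algebra setT G ->
  G `<=` measurable -> is_cond_exp P G X Y1 -> is_cond_exp P G X Y2 ->
  P [set w | Y2 w < Y1 w] = 0%E.
Proof.
move=> sG GM [m1 i1 e1] [m2 i2 e2].
set A := [set w | Y2 w < Y1 w].
have GA : G A.
  have := @Gm_from G (Y1 \- Y2) sG (measurable_funB (Gm_to m1) (Gm_to m2)).
  move=> /(_ `]0, +oo[%classic (measurable_itv _)).
  congr G; apply/seteqP; split => w /=; rewrite in_itv /= andbT subr_gt0 //.
have mA : measurable A by exact: GM.
have mf1 := Gm_meas GM m1; have mf2 := Gm_meas GM m2.
have i1A : P.-integrable A (EFin \o Y1) by exact: integrableS i1.
have i2A : P.-integrable A (EFin \o Y2) by exact: integrableS i2.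
have I0 : (\int[P]_(x in A) ((Y1 x)%:E - (Y2 x)%:E) = 0)%E.
  rewrite integralB_EFin // e1 // -e2 //; apply: subee.
  exact: (integrable_fin_num mA i2A).
have mD : measurable_fun A (EFin \o (Y1 \- Y2)).
  apply/measurable_EFinP; apply: measurable_funTS; exact: measurable_funB.
have := (ae_eq_integral_abs P mA mD).1.
case.
  rewrite -[RHS]I0; apply: eq_integral => x; rewrite inE /A /= => Ax.
  by rewrite ger0_norm ?subr_ge0 ?(ltW Ax).

move=> N [mN PN sN]; apply: (subset_measure0 mA mN) => // w Aw; apply: sN => /=.
move=> /(_ Aw) /=; move/eqP; rewrite eqe subr_eq0; move: Aw; rewrite /A /= => Aw.
by rewrite gt_eqF.
Qed.

Lemma ce_unique {P : probability Omega R} {G X Y1 Y2} : sigma_algebra setT G ->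
  G `<=` measurable -> is_cond_exp P G X Y1 -> is_cond_exp P G X Y2 ->
  {ae P, forall w, Y1 w = Y2 w}.
Proof.
move=> sG GM c1 c2.
have h1 := ce_half sG GM c1 c2; have h2 := ce_half sG GM c2 c1.
have mA : forall Z1 Z2, is_cond_exp P G X Z1 -> is_cond_exp P G X Z2 ->
    measurable [set w | Z2 w < Z1 w].
  move=> Z1 Z2 [m1 _ _] [m2 _ _]; apply: GM.
  have := @Gm_from G (Z1 \- Z2) sG (measurable_funB (Gm_to m1) (Gm_to m2)).
  move=> /(_ `]0, +oo[%classic (measurable_itv _)).
  congr G; apply/seteqP; split => w /=; rewrite in_itv /= andbT subr_gt0 //.
exists ([set w | Y2 w < Y1 w] `|` [set w | Y1 w < Y2 w]); split.
- by apply: measurableU; [exact: mA c1 c2|exact: mA c2 c1].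
- by rewrite measureU0 //; [exact: mA c1 c2|exact: mA c2 c1].
- move=> w /= /eqP; rewrite neq_lt => /orP[] h; [right|left]; exact: h.
Qed.

Local Open Scope ereal_scope.
Lemma lin_int (P : probability Omega R) D (I : Type) (s : seq I) (a : I -> R) (f : I -> Omega -> R) :
  measurable D -> (forall i, P.-integrable D (EFin \o f i)) ->
  P.-integrable D (EFin \o (fun w => \sum_(i <- s) a i * f i w)%R) /\
  \int[P]_(x in D) (\sum_(i <- s) a i * f i x)%R%:E =
    \sum_(i <- s) (a i)%:E * \int[P]_(x in D) (f i x)%:E.
Proof.
move=> mD fi; elim: s => [|i s [ih1 ih2]].
  rewrite big_nil; split.
    rewrite (_ : _ \o _ = cst 0); last by apply/funext => x; rewrite /= big_nil.
    exact: integrable0.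
  rewrite (eq_integral (cst 0)); first by rewrite integral0.
  by move=> x _; rewrite big_nil.
have ia : P.-integrable D (EFin \o (fun w => a i * f i w)%R).
  rewrite (_ : _ \o _ = (fun x => (a i)%:E * (f i x)%:E)); last first.
    by apply/funext => x.
  exact: (integrableZl mD (a i) (fi i)).
split.
  rewrite (_ : _ \o _ = (EFin \o (fun w => a i * f i w)%R) \+ 
     (EFin \o (fun w => \sum_(i <- s) a i * f i w)%R)); last first.
    by apply/funext => x; rewrite /= big_cons.
  exact: integrableD.
rewrite big_cons -ih2.
rewrite (eq_integral ((EFin \o (fun w => a i * f i w)%R) \+ 
     (EFin \o (fun w => \sum_(i <- s) a i * f i w)%R))); last first.
  by move=> x _; rewrite /= big_cons.
rewrite integralD_EFin //; congr (_ + _).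
rewrite (eq_integral (fun x => (a i)%:E * (f i x)%:E)) //.
exact: (integralZl mD (fi i)).
Qed.
Local Close Scope ereal_scope.
Lemma meas_sum d' (T : measurableType d') (I : Type) (s : seq I) (a : I -> R) (f : I -> T -> R) :
  (forall i, measurable_fun setT (f i)) ->
  measurable_fun setT (fun w => \sum_(i <- s) a i * f i w).
Proof.
move=> mf; elim: s => [|i s ih].
  rewrite (_ : (fun _ => _) = cst 0); first exact: measurable_cst.
  by apply/funext => x; rewrite big_nil.
rewrite (_ : (fun _ => _) = (fun w => a i * f i w) \+ (fun w => \sum_(i <- s) a i * f i w)).
  apply: measurable_funD => //; apply: measurable_funM => //; exact: measurable_cst.
by apply/funext => x; rewrite big_cons.
Qed.

Lemma ce_lin (P : probability Omega R) G (I : finType) (a : I -> R)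
  (Xs Ys : I -> Omega -> R) X Y :
  sigma_algebra setT G -> G `<=` measurable ->
  (forall i, P.-integrable setT (EFin \o Xs i)) ->
  (forall i, is_cond_exp P G (Xs i) (Ys i)) ->
  is_cond_exp P G X Y -> (forall w, X w = \sum_i a i * Xs i w) ->
  {ae P, forall w, Y w = \sum_i a i * Ys i w}.
Proof.
move=> sG GM iX cY cXY eX.
apply: (ce_unique sG GM cXY); split.
- apply: Gm_from => //; apply: meas_sum => i.
  by case: (cY i) => m _ _; exact: Gm_to.
- have fi : forall i, P.-integrable setT (EFin \o Ys i) by move=> i; case: (cY i).
  have := (proj1 (lin_int P _ _ (index_enum I) a _ measurableT fi)).
  exact.
- move=> A GA; have mA := GM _ GA.
  rewrite (proj2 (lin_int P _ _ (index_enum I) a _ mA _)); last by move=> i; case: (cY i) => _ h _; exact: integrableS h.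
  rewrite (eq_integral (fun x => (\sum_i a i * Xs i x)%:E)); last by move=> x _; rewrite eX.
  rewrite (proj2 (lin_int P _ _ (index_enum I) a _ mA _)); last by move=> i; exact: integrableS (iX i).
  apply: eq_bigr => i _; case: (cY i) => _ _ ->//.
Qed.
End S.

Section S2.
Context {R : realType} {d : measure_display} {Omega : measurableType d}.

Lemma inside_meas (f : R -> Omega -> R) lo hi a b :
  0 < a -> a < b ->
  (forall u, 0 < u -> measurable_fun setT (f u)) ->
  (forall w u, 0 < u -> {for u, continuous (fun v => f v w)}) ->
  measurable (inside f lo hi `[a, b]).
Proof.
move=> a0 ab mf cf.
pose E (m : nat) (q : rat) : set Omega := if ratr q \in `[a, b] then
  [set w | lo + (m.+1%:R)^-1 <= f (ratr q) w <= hi - (m.+1%:R)^-1] else setT.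
have -> : inside f lo hi `[a, b] = \bigcup_m \bigcap_q E m q.
  apply/seteqP; split => w.
  - move=> /= Hw; set g := fun v => f v w.
    have cg : {within `[a, b], continuous g}.
      apply: continuous_in_subspaceT => u; rewrite inE /= in_itv /= => /andP[au _].
      exact: cf (lt_le_trans a0 au).
    have [c1 c1ab Hc1] := EVT_min (ltW ab) cg.
    have [c2 c2ab Hc2] := EVT_max (ltW ab) cg.
    have /andP[l1 _] := Hw c1 c1ab.
    have /andP[_ h2] := Hw c2 c2ab.
    pose del := Num.min (g c1 - lo) (hi - g c2).
    have del0 : 0 < del by rewrite lt_min !subr_gt0 l1 h2.
    exists (Num.truncn del^-1) => //= q _; rewrite /E.
    case: ifP => // qab /=.
    have hm : (Num.truncn del^-1).+1%:R^-1 < del.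
      rewrite invf_plt ?posrE ?ltr0n //.
      by rewrite -truncn_lt_nat ?invr_ge0 ?ltW.
    have := Hc1 _ qab; have := Hc2 _ qab; rewrite /g => q2 q1.
    apply/andP; split.
    + apply: (le_trans _ q1); rewrite -lerBrDl; apply/ltW/(lt_le_trans hm).
      by rewrite /del ge_min lexx.
    + apply: (le_trans q2); rewrite lerBrDr -lerBrDl; apply/ltW/(lt_le_trans hm).
      by rewrite /del ge_min lexx orbT.
  - case=> m _ Hm u uab; set e := (m.+1%:R)^-1 : R.
    have e0 : 0 < e by rewrite invr_gt0 ltr0n.
    have u0 : 0 < u by move: uab; rewrite /= in_itv /= => /andP[au _]; exact: lt_le_trans a0 au.
    have := cf w u u0 => /cvgrPdist_lt /(_ e e0) /nbhs_ballP [del /= del0 Hdel].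
    have [q qin] : exists q : rat, ratr q \in `]Num.max a (u - del), Num.min b (u + del)[.
      apply: rat_in_itvoo; move: uab; rewrite /= in_itv /= => /andP[au ub].
      rewrite gt_max !lt_min; apply/andP; split; apply/andP; split; lra.
    move: qin; rewrite in_itv /= gt_max lt_min => /andP[/andP[aq uq] /andP[qb qu]].
    have qab : ratr q \in `[a, b] by rewrite in_itv /= (ltW aq) (ltW qb).
    have := Hm q I; rewrite /E qab /= => /andP[q1 q2].
    have hb : ball u del (ratr q).
      by rewrite /ball /= ltr_norml; apply/andP; split; lra.
    have := Hdel _ hb; rewrite /= ltr_norml => /andP[h1 h2].
    rewrite -/e in q1 q2; apply/andP; split; lra.
apply: bigcupT_measurable => m.
rewrite -[X in measurable X]setCK setC_bigcap; apply: measurableC.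
apply: bigcupT_measurable_rat => q; apply: measurableC; rewrite /E.
case: ifP => // qab.
have : measurable (f (ratr q) @^-1` `[lo + (m.+1%:R)^-1, hi - (m.+1%:R)^-1]).
  rewrite -[X in measurable X]setTI; apply: mf => //.
  by move: qab; rewrite in_itv /= => /andP[aq _]; exact: lt_le_trans a0 aq.
by congr measurable; apply/seteqP; split => w; rewrite /= in_itv.
Qed.
End S2.

Lemma prodfact_dvd (s : seq nat) : (\prod_(x <- s) x`! %| (sumn s)`!)%N.
Proof.
elim: s => [|j s ih]; first by rewrite big_nil.
rewrite big_cons /= -(bin_fact (leq_addr (sumn s) j)) addKn.
by rewrite mulnCA dvdn_mul // dvdn_mull.
Qed.

Lemma multinom_cons nu j s :
  multinom nu (j :: s) = if (j <= nu)%N then ('C(nu, j) * multinom (nu - j) s)%N else 0%N.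
Proof.
rewrite /multinom /=; case: ifP => [/eqP <-|hne].
  rewrite leq_addr addKn eqxx big_cons.
  have [Q HQ] := dvdnP (prodfact_dvd s).
  rewrite -(bin_fact (leq_addr (sumn s) j)) addKn HQ.
  have hp : (0 < \prod_(x <- s) x`!)%N by rewrite prodn_gt0 // => x; exact: fact_gt0.
  set P := \prod_(x <- s) x`!; set C := 'C(_, _).
  have -> : (C * (j`! * (Q * P)) = (C * Q) * (j`! * P))%N by ring.
  by rewrite !mulnK // muln_gt0 fact_gt0.
case: ifP => // jnu; case: eqP => [hs|_]; last by rewrite muln0.
by move/eqP: hne; rewrite hs subnKC.
Qed.

Definition fcons {n} {T : Type} (j : T) (g : {ffun 'I_n -> T}) : {ffun 'I_n.+1 -> T} :=
  [ffun k => if unlift ord0 k is Some k' then g k' else j].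

Lemma fcons0 n T j g : @fcons n T j g ord0 = j.
Proof. by rewrite ffunE unlift_none. Qed.
Lemma fconsS n T j g k : @fcons n T j g (lift ord0 k) = g k.
Proof. by rewrite ffunE liftK. Qed.

Lemma sum_ffunS (R : nmodType) (T : finType) n (F : {ffun 'I_n.+1 -> T} -> R) :
  \sum_f F f = \sum_(j : T) \sum_(g : {ffun 'I_n -> T}) F (fcons j g).
Proof.
rewrite pair_big /= (reindex (fun p : T * {ffun 'I_n -> T} => fcons p.1 p.2)) //.
exists (fun f : {ffun 'I_n.+1 -> T} => (f ord0, [ffun k : 'I_n => f (lift ord0 k)])) => [[j g] _|f _] /=.
  by rewrite fcons0; congr (_, _); apply/ffunP => k; rewrite ffunE fconsS.
apply/ffunP => k; rewrite ffunE; case: unliftP => [k' ->|->] //.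
by rewrite ffunE.
Qed.

Lemma multinomial_thm (R : comNzRingType) (B : nat) : forall n nu (x : 'I_n -> R), (nu <= B)%N ->
  (\sum_k x k) ^+ nu = \sum_(i : {ffun 'I_n -> 'I_B.+1})
     (multinom nu [seq val (i k) | k <- enum 'I_n])%:R * \prod_k x k ^+ i k.
Proof.
elim=> [|n ih] nu x nuB.
  rewrite big_ord0 (big_pred1 [ffun k => ord0]); last first.
    by move=> f; apply/esym/eqP/ffunP => -[].
  rewrite big_ord0 mulr1 enum_ord0 /= /multinom /= big_nil divn1.
  by case: nu {nuB} => [|nu]; rewrite ?expr0 ?expr0n //=.
rewrite big_ord_recl addrC exprDn sum_ffunS.
have -> : \sum_(j : 'I_B.+1) \sum_(g : {ffun 'I_n -> 'I_B.+1})
     (multinom nu [seq val (fcons j g k) | k <- enum 'I_n.+1])%:R *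
       \prod_k x k ^+ fcons j g k =
    \sum_(j : 'I_B.+1) if (j <= nu)%N then
      ((\sum_(i < n) x (lift ord0 i)) ^+ (nu - j) * x ord0 ^+ j) *+ 'C(nu, j) else 0.
  apply: eq_bigr => j _.
  have hseq : forall g : {ffun 'I_n -> 'I_B.+1},
      [seq val (fcons j g k) | k <- enum 'I_n.+1] = val j :: [seq val (g k) | k <- enum 'I_n].
    by move=> g; rewrite enum_ordSl /= fcons0 -map_comp; congr (_ :: _); apply: eq_map => k /=; rewrite fconsS.
  case: ifP => jnu.
    rewrite (ih (nu - j)%N (fun i => x (lift ord0 i))) ?(leq_trans (leq_subr _ _)) //.
    rewrite -mulr_natr !mulr_suml; apply: eq_bigr => g _.
    rewrite hseq multinom_cons jnu natrM big_ord_recl fcons0.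
    under [in LHS]eq_bigr do rewrite fconsS.
    ring.
  apply: big1 => g _; rewrite hseq multinom_cons jnu mul0r //.
rewrite (big_ord_widen B.+1 (fun j : nat => ((\sum_(i < n) x (lift ord0 i)) ^+ (nu - j) * x ord0 ^+ j) *+ 'C(nu, j))) //.
by rewrite big_mkcond; apply: eq_bigr => j _; rewrite ltnS.
Qed.


Lemma moment_binary (R : comNzRingType) n nu (c : 'I_n -> R) :
  (forall k, c k = 0 \/ c k = 1) ->
  (\sum_k c k) ^+ nu = \sum_(J : {set 'I_n}) (cnuJ nu J)%:R * \prod_(k in J) c k.
Proof.
move=> c01; rewrite (@multinomial_thm R nu) //.
rewrite (partition_big (fun i : {ffun 'I_n -> 'I_nu.+1} => finset (fun k => val (i k) != 0%N)) xpredT) //.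
apply: eq_bigr => J _; rewrite /cnuJ natr_sum mulr_suml; apply: eq_big => [i //|i /eqP hJ].
congr (_ * _); rewrite (bigID (mem J)) /= [X in _ * X]big1 ?mulr1.
  apply: eq_bigr => k kJ; move: kJ; rewrite -hJ inE => ik0.
  by case: (c01 k) => ->; rewrite ?expr0n ?expr1n // (negPf ik0).
by move=> k; rewrite -hJ inE negbK => /eqP ->; rewrite expr0.
Qed.

Lemma vander_unique (R : numFieldType) n (y : nat -> R) :
  (forall nu, (nu < n)%N -> \sum_(i < n.+1) (i%:R) ^+ nu * y i = 0) -> y n = 0 ->
  forall i, (i <= n)%N -> y i = 0.
Proof.
move=> hy yn0 j; rewrite leq_eqVlt => /orP[/eqP -> //|jn].
have H : forall p : {poly R}, (size p <= n)%N -> \sum_(i < n.+1) p.[i%:R] * y i = 0.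
  move=> p sp.
  under eq_bigr do rewrite (horner_coef_wide _ sp) mulr_suml.
  rewrite exchange_big /=; apply: big1 => nu _.
  under eq_bigr do rewrite -mulrA.
  by rewrite -mulr_sumr hy ?mulr0.
pose r := [seq (i%:R : R) | i <- iota 0 n & i != j].
pose p := \prod_(a <- r) ('X - a%:P).
have sp : (size p <= n)%N.
  rewrite /p size_prod_XsubC /r size_map size_filter.
  have := count_predC (fun i => i != j) (iota 0 n); rewrite size_iota.
  have -> : count (predC (fun i => i != j)) (iota 0 n) = count_mem j (iota 0 n).
    by apply: eq_count => i /=; rewrite negbK.
  rewrite count_uniq_mem ?iota_uniq // mem_iota add0n jn /=.
  by move=> h; rewrite -[in X in (_ < X)%N]h addn1 ltnSn.
have := H p sp; rewrite (bigD1 (@Ordinal n.+1 j (ltnW jn))) //= big1 ?addr0.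
  move/eqP; rewrite mulf_eq0 => /orP[|/eqP //].
  rewrite /p horner_prod prodf_seq_eq0 => /hasP[a /mapP[i]].
  rewrite mem_filter mem_iota add0n => /andP[ij _] -> /=.
  by rewrite hornerXsubC subr_eq0 eqr_nat eq_sym (negPf ij).
move=> [i ilt] /= hij.
have [ilt'|] := ltnP i n.
  rewrite /p horner_prod; apply/eqP; rewrite mulf_eq0; apply/orP; left.
  rewrite prodf_seq_eq0; apply/hasP; exists (i%:R); last by rewrite /= hornerXsubC subrr eqxx.
  apply/mapP; exists i => //; rewrite mem_filter mem_iota add0n ilt' andbT.
  rewrite andbT; move: hij; apply: contra => /eqP hh; apply/eqP/val_inj => /=; by rewrite hh.
move=> ni; have ein : i = n by apply/eqP; rewrite eqn_leq ni andbT; exact: ilt.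
by rewrite ein yn0 mulr0.
Qed.

Theorem theorem4p1 (R : realType) (d : measure_display) (Omega : measurableType d)
  (P : probability Omega R) (F : R -> set (set Omega)) (W : R -> Omega -> R)
  (r sigma S0 : R) (S : R -> Omega -> R)
  (n : nat) (T : nat -> R) (Per Blow Bup Fk t : R) :
  is_filtration F -> std_BM P F W -> 0 < r -> 0 < sigma -> 0 < S0 ->
  (forall u w, S u w = S0 * expR ((r - sigma ^+ 2 / 2) * u + sigma * W u w)) ->
  (1 <= n)%N -> 0 < T 0%N -> 0 < Per ->
  (forall i, (1 <= i <= n)%N -> T i = T i.-1 + Per) ->
  0 < Blow -> Blow < Bup -> 0 < Fk -> 0 <= t -> t < T 0%N ->
  let C := fun k : 'I_n => \1_(inside S Blow Bup `[T k, T k.+1]) : Omega -> R in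
  let A := fun w => \sum_(k < n) C k w in
  forall (V : Omega -> R) (p : nat -> Omega -> R) (q : Omega -> R)
         (m : nat -> Omega -> R) (pJ : {set 'I_n} -> Omega -> R),
  is_cond_exp P (F t) (fun w => Num.max (Fk - A w) 0) V ->
  (forall i, (i <= n)%N -> is_cond_exp P (F t) \1_[set w | A w = i%:R] (p i)) ->
  is_cond_exp P (F t) \1_(inside S Blow Bup `[T 0%N, T n]) q ->
  (forall nu, (nu < n)%N -> is_cond_exp P (F t) (fun w => A w ^+ nu) (m nu)) ->
  (forall J : {set 'I_n}, is_cond_exp P (F t)
      \1_(inside S Blow Bup (\bigcup_(j in [set j | j \in J]) [set` `[T j, T j + Per]]))
      (pJ J)) ->
  {ae P, forall w,
    [/\ expR (- r * (T n - t)) * V w =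
        expR (- r * (T n - t)) *
          \sum_(0 <= i < (minn n (Num.truncn Fk)).+1) (Fk - i%:R) * p i w,
        p n w = q w,
        forall nu, (nu < n)%N -> m nu w = \sum_(i < n.+1) (i%:R) ^+ nu * p i w,
        forall x : nat -> R, x n = q w ->
          (forall nu, (nu < n)%N -> m nu w = \sum_(i < n.+1) (i%:R) ^+ nu * x i) ->
          forall i, (i <= n)%N -> x i = p i w
      & forall nu, (1 <= nu < n)%N ->
          m nu w = \sum_(J : {set 'I_n}) (cnuJ nu J)%:R * pJ J w]}.
Proof.
move=> hF hBM r0 s0 S00 hS n1 T00 Per0 hT Bl0 BlBu Fk0 t0 tT0 C A V p q m pJ cV cp cq cm cpJ.
have [sG GM] := hF.1 t t0.
have Tlin : forall k, (k <= n)%N -> T k = T 0%N + k%:R * Per.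
  elim=> [|k ih] kn; first by rewrite mul0r addr0.
  by rewrite hT ?kn //= ih ?(ltnW kn) // -addn1 natrD mulrDl mul1r addrA.
have Tpos : forall k, (k <= n)%N -> 0 < T k.
  move=> k kn; rewrite Tlin //; apply: ltr_wpDr => //.
  by apply: mulr_ge0; [exact: ler0n | exact: ltW].
have Tmono : forall i j, (i <= j)%N -> (j <= n)%N -> T i <= T j.
  move=> i j ij jn; rewrite (Tlin i) ?(leq_trans ij) // (Tlin j) // lerD2l.
  by apply: ler_wpM2r; [exact: ltW | rewrite ler_nat].
have TS : forall k, (k < n)%N -> T k.+1 = T k + Per by move=> k kn; rewrite hT ?kn.
case: hBM => W0 cW mW _ _.
have mWu : forall u, 0 <= u -> measurable_fun setT (W u).
  by move=> u u0; exact: Gm_meas (hF.1 u u0).2 (mW u u0).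
have eS : S = fun u w => S0 * expR ((r - sigma ^+ 2 / 2) * u + sigma * W u w).
  by apply/funext => u; apply/funext => w; rewrite hS.
have mS : forall u, 0 < u -> measurable_fun setT (S u).
  move=> u u0; rewrite eS; apply: measurable_funM; first exact: measurable_cst.
  apply: measurableT_comp; first exact: measurable_expR.
  apply: measurable_funD; first exact: measurable_cst.
  apply: measurable_funM; first exact: measurable_cst.
  exact: mWu (ltW u0).
have cS : forall w u, 0 < u -> {for u, continuous (fun v => S v w)}.
  move=> w u u0; rewrite eS /=.
  have cWu : {for u, continuous (fun v => W v w)}.
    have := (continuous_within_itvcyP 0 (fun v => W v w)).1 (cW w).
    by case=> + _; apply; rewrite in_itv /= u0.
  apply: cvgM; first exact: cvg_cst.
  apply: (continuous_comp (f := fun v => (r - sigma ^+ 2 / 2) * v + sigma * W v w)); last first.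
    exact: continuous_expR.
  apply: cvgD; apply: cvgM; (try exact: cvg_cst); [exact: cvg_id | exact: cWu].
pose E (k : nat) := inside S Blow Bup `[T k, T k.+1].
have mE : forall k, (k < n)%N -> measurable (E k).
  move=> k kn; apply: inside_meas => //; first exact: Tpos (ltnW kn).
  by rewrite TS // ltrDl.
have CE : forall (k : 'I_n) w, C k w = ((w \in E k) : nat)%:R.
  by move=> k w; rewrite /C indicE.
pose N w := (\sum_(k < n) ((w \in E k) : nat))%N.
have AN : forall w, A w = (N w)%:R.
  by move=> w; rewrite /A /N natr_sum; apply: eq_bigr => k _; rewrite CE.
have Nle : forall w, (N w <= n)%N.
  move=> w; rewrite /N; apply: (@leq_trans (\sum_(k < n) 1)%N).
    by apply: leq_sum => k _; exact: leq_b1.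
  by rewrite sum1_card card_ord.
have mA : measurable_fun setT A.
  have -> : A = fun w => \sum_(k <- index_enum 'I_n) 1 * C k w.
    by apply/funext => w; rewrite /A; apply: eq_bigr => k _; rewrite mul1r.
  apply: meas_sum => k; exact: measurable_indic (mE k (ltn_ord k)).
have mAi : forall x : R, measurable [set w | A w = x].
  move=> x; rewrite -[X in measurable X]setTI; exact: mA measurableT _ (measurable_set1 x).
have ind : forall w (i : nat), \1_[set w | A w = i%:R] w = ((N w == i) : nat)%:R :> R.
  move=> w i; rewrite indicE; congr ((nat_of_bool _)%:R).
  have [h|h] := pselect (A w = i%:R).
    by rewrite (@mem_set _ [set w | A w = i%:R] w h); move: h; rewrite AN => /eqP; rewrite eqr_nat => ->.
  rewrite (@memNset _ [set w | A w = i%:R] w h); apply/esym/negbTE; apply/negP => /eqP hh.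
  by apply: h; rewrite AN hh.
have sumpick : forall (G : nat -> R) K w,
    \sum_(i < K) G i * ((N w == i) : nat)%:R = if (N w < K)%N then G (N w) else 0.
  move=> G K w; case: ifP => hK.
    rewrite (bigD1 (Ordinal hK)) //= eqxx mulr1 big1 ?addr0 // => i hi.
    rewrite (_ : (N w == i) = false) ?mulr0 //; apply/negbTE; apply: contra hi => /eqP hh.
    by apply/eqP/val_inj; rewrite /= hh.
  apply: big1 => i _; rewrite (_ : (N w == i) = false) ?mulr0 //.
  by apply/negbTE/eqP => hh; move: hK; rewrite hh ltn_ord.
have Emem : forall (k : 'I_n) w, (w \in E k) <-> (forall u, T k <= u <= T k.+1 -> Blow < S u w < Bup).
  move=> k w; split.
    by move=> /set_mem H u hu; apply: H; rewrite /= in_itv /=.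
  by move=> H; apply: mem_set => u; rewrite /= in_itv /=; exact: H.
pose M := minn n (Num.truncn Fk).
have he1 : forall w, Num.max (Fk - A w) 0 =
    \sum_(i < M.+1) (Fk - (i : nat)%:R) * \1_[set w | A w = (i : nat)%:R] w.
  move=> w; under eq_bigr => i _ do rewrite ind.
  rewrite (sumpick (fun i => Fk - i%:R)) AN; case: ifP => h.
    have : (N w <= Num.truncn Fk)%N by rewrite -ltnS (leq_trans h) // ltnS geq_minr.
    by rewrite (truncn_ge_nat _ (ltW Fk0)) => hN; rewrite max_l // subr_ge0.
  have hT' : (Num.truncn Fk < N w)%N.
    move/negbT: h; rewrite -leqNgt /M.
    case/orP: (leq_total n (Num.truncn Fk)) => hm.
      by rewrite (minn_idPl hm) => hh; move: (Nle w); rewrite leqNgt hh.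
    by rewrite (minn_idPr hm).
  by move: hT'; rewrite (truncn_lt_nat _ (ltW Fk0)) => hN; rewrite max_r // subr_le0 (ltW hN).
have hi1 : forall i : 'I_M.+1, P.-integrable setT (EFin \o \1_[set w | A w = (i : nat)%:R]).
  by move=> i; exact (integrable_indic P (mAi _)).
have hc1 : forall i : 'I_M.+1, is_cond_exp P (F t) \1_[set w | A w = (i : nat)%:R] (p i).
  by move=> i; apply: cp; rewrite -ltnS (leq_trans (ltn_ord i)) // ltnS geq_minl.
have H1 : {ae P, forall w, V w = \sum_(i < M.+1) (Fk - (i : nat)%:R) * p i w}.
  exact: (ce_lin P (F t) 'I_M.+1 (fun i => Fk - (i : nat)%:R)
     (fun i => \1_[set w | A w = (i : nat)%:R]) (fun i => p i) _ V sG GM hi1 hc1 cV he1).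
have H3 : {ae P, forall w, forall nu : 'I_n, m nu w = \sum_(i < n.+1) ((i : nat)%:R) ^+ nu * p i w}.
  apply: filter_forall => nu.
  apply: (ce_lin P (F t) 'I_n.+1 (fun i => (i : nat)%:R ^+ nu)
    (fun i => \1_[set w | A w = (i : nat)%:R]) (fun i => p i) _ (m nu) sG GM _ _ (cm nu (ltn_ord nu))).
  - by move=> i; exact (integrable_indic P (mAi _)).
  - by move=> i; apply: cp; rewrite -ltnS.
  - move=> w /=; under eq_bigr => i _ do rewrite ind.
    by rewrite (sumpick (fun i => i%:R ^+ nu)) ltnS Nle AN.
have insU : forall J : {set 'I_n},
   inside S Blow Bup (\bigcup_(j in [set j | j \in J]) [set` `[T j, T j + Per]]) =
   \bigcap_(k in [set k : 'I_n | k \in J]) E k.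
  move=> J; apply/seteqP; split => w.
    move=> H k kJ u uin; apply: H; exists k => //.
    by move: uin; rewrite /= -TS.
  move=> H u [k kJ uin]; apply: (H k kJ).
  by move: uin; rewrite /= TS.
have H5 : {ae P, forall w, forall nu : 'I_n, m nu w = \sum_(J : {set 'I_n}) (cnuJ nu J)%:R * pJ J w}.
  apply: filter_forall => nu.
  apply: (ce_lin P (F t) {set 'I_n} (fun J => (cnuJ nu J)%:R)
    (fun J => \1_(inside S Blow Bup (\bigcup_(j in [set j | j \in J]) [set` `[T j, T j + Per]])))
    pJ _ (m nu) sG GM _ cpJ (cm nu (ltn_ord nu))).
  - move=> J; apply: integrable_indic; rewrite insU.
    by apply: fin_bigcap_measurable; [exact: finite_finset | move=> k _; exact: mE].
  - move=> w; rewrite /A (@moment_binary _ n nu (fun k => C k w)); last first.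
      by move=> k; rewrite CE; case: (w \in E k); [right|left].
    apply: eq_bigr => J _; congr (_ * _); rewrite insU indicE.
    under eq_bigr do rewrite CE.
    have [h|h] := pselect (forall k : 'I_n, k \in J -> w \in E k).
      rewrite mem_set; last by move=> k /= kJ; apply/set_mem/h.
      by rewrite big1 // => k kJ; rewrite h.
    have [k /not_implyP [kJ nE]] := (existsNP _).2 h.
    rewrite memNset; last by move=> hh; apply: nE; apply: mem_set; exact: hh.
    by rewrite (bigD1 k) //= (negbTE (introN idP nE)) mul0r.
have allE : forall w, (forall k : 'I_n, w \in E k) ->
    forall j, (j <= n)%N -> forall u, T 0%N <= u <= T j -> Blow < S u w < Bup.
  move=> w hE; elim=> [|j ih] jn u /andP[u0 uj].
    apply: ((Emem (Ordinal n1) w).1 (hE _)); rewrite /= u0 /=.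
    by apply: (le_trans uj); apply: Tmono.
  case: (leP u (T j)) => hu.
    by apply: ih; [exact: ltnW | rewrite u0 hu].
  by apply: ((Emem (Ordinal jn) w).1 (hE _)); rewrite /= (ltW hu) uj.
have eqn : [set w | A w = n%:R] = inside S Blow Bup `[T 0%N, T n].
  apply/seteqP; split => w /=.
  - rewrite AN => /eqP; rewrite eqr_nat => /eqP hN.
    have hE : forall k : 'I_n, w \in E k.
      have hs : (N w + \sum_(k < n) ((w \notin E k) : nat) = n)%N.
        rewrite /N -big_split /=.
        rewrite (eq_bigr (fun _ => 1%N)); first by rewrite sum1_card card_ord.
        by move=> k _; case: (w \in E k).
      move: hs; rewrite hN -[X in _ = X]addn0 => /eqP; rewrite eqn_add2l sum_nat_eq0.
      move=> /forallP hh k; have := hh k; by case: (w \in E k).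
    by move=> u; rewrite /= in_itv /=; exact: allE hE n (leqnn n) u.
  - move=> H; rewrite AN; congr (_%:R).
    rewrite /N (eq_bigr (fun _ => 1%N)); first by rewrite sum1_card card_ord.
    move=> k _; rewrite (_ : w \in E k) //; apply/(Emem k w) => u /andP[u1 u2].
    apply: H; rewrite /= in_itv /=; apply/andP; split.
      by apply: le_trans u1; apply: Tmono => //; exact: ltnW.
    by apply: le_trans u2 _; apply: Tmono.
have H2 : {ae P, forall w, p n w = q w}.
  apply: (ce_unique sG GM (cp n (leqnn n))); rewrite eqn; exact: cq.
have H12 := filterS2 (ae_filter_ringOfSetsType P) (fun w (a : V w = _) (b : p n w = q w) => conj a b) H1 H2.
have H35 := filterS2 (ae_filter_ringOfSetsType P) (fun w (a : forall nu : 'I_n, _) (b : forall nu : 'I_n, _) => conj a b) H3 H5.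
have H := filterS2 (ae_filter_ringOfSetsType P) (fun w (a : V w = _ /\ p n w = q w) (b : (forall nu : 'I_n, _) /\ (forall nu : 'I_n, _)) => conj a b) H12 H35.
move: H; apply: (filterS (F := almost_everywhere P)) => w [[h1 h2] [h3 h5]].
split.
- by rewrite h1 big_mkord.
- exact: h2.
- by move=> nu nun; exact: (h3 (Ordinal nun)).
- move=> x xn hx i iin; apply/eqP; rewrite -subr_eq0; apply/eqP.
  apply: (@vander_unique _ n (fun i => x i - p i w)) => //.
    move=> nu nun; under eq_bigr do rewrite mulrBr.
    by rewrite sumrB -(hx nu nun) -(h3 (Ordinal nun)) subrr.
  by rewrite /= xn h2 subrr.
- by move=> nu /andP[_ nun]; exact: (h5 (Ordinal nun)).
Qed.
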